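(* Let $\mathbf{M}^*\in\mathbb{R}^{d_1\times d_2}$ have rank $r$, and let $f(\mathbf{U},\mathbf{V})=\frac12\|\mathbf{U}\mathbf{V}^\top-\mathbf{M}^*\|_F^2$ for $\mathbf{U}\in\mathbb{R}^{d_1\times r}$, $\mathbf{V}\in\mathbb{R}^{d_2\times r}$. Let $0<\epsilon<\|\mathbf{M}^*\|_F$ and $d=\max\{d_1,d_2\}$. Suppose the entries of $\mathbf{U}_0$ and $\mathbf{V}_0$ are drawn i.i.d. from $\mathcal{N}(0,\frac{\epsilon}{\mathrm{poly}(d)})$ (with a sufficiently large polynomial in $d$), and run gradient descent $$\mathbf{U}_{t+1}=\mathbf{U}_t-\eta_t(\mathbf{U}_t\mathbf{V}_t^\top-\mathbf{M}^* )\mathbf{V}_t,\qquad \mathbf{V}_{t+1}=\mathbf{V}_t-\eta_t(\mathbf{U}_t\mathbf{V}_t^\top-\mathbf{M}^* )^\top\mathbf{U}_t$$ with step sizes $\eta_t=\frac{\sqrt{\epsilon/r}}{100(t+1)\|\mathbf{M}^*\|_F^{3/2}}$, $t=0,1,\dots$. Then with high probability over the initialization $(\mathbf{U}_0,\mathbf{V}_0)$, for all $t$: (i) $\|\mathbf{U}_t^\top\mathbf{U}_t-\mathbf{V}_t^\top\mathbf{V}_t\|_F\le\epsilon$; (ii) $f(\mathbf{U}_t,\mathbf{V}_t)\le f(\mathbf{U}_{t-1},\mathbf{V}_{t-1})\le\cdots\le f(\mathbf{U}_0,\mathbf{V}_0)\le 2\|\mathbf{M}^*\|_F^2$; (iii)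 $\|\mathbf{U}_t\|_F^2\le 5\sqrt{r}\|\mathbf{M}^*\|_F$ and $\|\mathbf{V}_t\|_F^2\le 5\sqrt{r}\|\mathbf{M}^*\|_F$.
   Context: $\|\cdot\|_F$ is the Frobenius norm. *)

(* Defs.v *)
From HB Require Import structures.
From mathcomp Require Import all_boot all_order all_algebra.
From mathcomp Require Import all_classical all_reals all_analysis.
Set Implicit Arguments. Unset Strict Implicit. Unset Printing Implicit Defensive.
Import Order.TTheory GRing.Theory Num.Theory.
Local Open Scope classical_set_scope.
Local Open Scope ring_scope.

Section Defs.
Variable R : realType.

Definition frob (m n : nat) (A : 'M[R]_(m, n)) : R :=
  Num.sqrt (\sum_(i < m) \sum_(j < n) A i j ^+ 2).

Definition fobj (d1 d2 r : nat) (M : 'M[R]_(d1, d2))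
  (U : 'M[R]_(d1, r)) (V : 'M[R]_(d2, r)) : R :=
  (frob (U *m V^T - M)) ^+ 2 / 2.

Definition gd_step (d1 d2 r : nat) (M : 'M[R]_(d1, d2)) (eta : R)
  (UV : 'M[R]_(d1, r) * 'M[R]_(d2, r)) : 'M[R]_(d1, r) * 'M[R]_(d2, r) :=
  let U := UV.1 in let V := UV.2 in
  (U - eta *: ((U *m V^T - M) *m V), V - eta *: ((U *m V^T - M)^T *m U)).

Fixpoint gd (d1 d2 r : nat) (M : 'M[R]_(d1, d2)) (eta : nat -> R)
  (U0 : 'M[R]_(d1, r)) (V0 : 'M[R]_(d2, r)) (t : nat)
  : 'M[R]_(d1, r) * 'M[R]_(d2, r) :=
  match t with
  | 0 => (U0, V0)
  | t'.+1 => gd_step M (eta t') (gd M eta U0 V0 t')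
  end.

Definition step_size (d1 d2 : nat) (M : 'M[R]_(d1, d2)) (eps : R) (r : nat)
  (t : nat) : R :=
  Num.sqrt (eps / r%:R) / (100 * (t.+1)%:R * (frob M * Num.sqrt (frob M))).

Definition init_entries (T : Type) (d1 d2 r : nat)
  (U0 : T -> 'M[R]_(d1, r)) (V0 : T -> 'M[R]_(d2, r))
  (k : ('I_d1 * 'I_r + 'I_d2 * 'I_r)%type) (w : T) : R :=
  match k with
  | inl ij => U0 w ij.1 ij.2
  | inr ij => V0 w ij.1 ij.2
  end.

(* A finite family X of real random variables is i.i.d. N(0, s^2):
   each is measurable, has law N(0, s^2), and they are mutually independent
   (product rule for every family of Borel sets, which for a finite index
   set is equivalent to mutual independence). *)
Definition iid_normal (dT : measure_display) (T : measurableType dT)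
  (P : probability T R) (I : finType) (X : I -> T -> R) (s : R) : Prop :=
  (forall k, measurable_fun setT (X k)) /\
  (forall k (B : set R), measurable B ->
      P (X k @^-1` B) = normal_prob 0 s B) /\
  (forall B : I -> set R, (forall k, measurable (B k)) ->
      P (\bigcap_(k in [set: I]) (X k @^-1` B k)) =
      (\prod_(k : I) P (X k @^-1` B k))%E).

End Defs.

(* Main.v *)
Require Import Defs.
From HB Require Import structures.
From mathcomp Require Import all_boot all_order all_algebra.
From mathcomp Require Import all_classical all_reals all_analysis.
From mathcomp Require Import ring lra.
From mathcomp Require Import measurable_realfun.
Set Implicit Arguments. Unset Strict Implicit. Unset Printing Implicit Defensive.
Import Order.TTheory GRing.Theory Num.Theory.
Local Open Scope classical_set_scope.
Local Open Scope ring_scope.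
Ltac pos := match goal with
  | |- is_true (0 <= _ * _) => apply: mulr_ge0; pos
  | |- is_true (0 <= _ + _) => apply: addr_ge0; pos
  | |- _ => first [done | apply: sqr_ge0 | (apply: ltW; done) | apply: sqrtr_ge0 | apply: ler0n | lra]
  end.
Section Mx.
Variable R : realType.

Definition dotm (m n : nat) (A B : 'M[R]_(m, n)) : R := \tr (A^T *m B).
Definition sqf (m n : nat) (A : 'M[R]_(m, n)) : R := dotm A A.

Lemma dotmE m n (A B : 'M[R]_(m, n)) :
  dotm A B = \sum_(i < m) \sum_(j < n) A i j * B i j.
Proof.
rewrite /dotm /mxtrace exchange_big /=; apply: eq_bigr => j _.
rewrite !mxE; apply: eq_bigr => i _; by rewrite !mxE.
Qed.

Lemma sqfE m n (A : 'M[R]_(m, n)) :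
  sqf A = \sum_(i < m) \sum_(j < n) A i j ^+ 2.
Proof. by rewrite /sqf dotmE; apply: eq_bigr => i _; apply: eq_bigr => j _; rewrite expr2. Qed.

Lemma sqf_ge0 m n (A : 'M[R]_(m, n)) : 0 <= sqf A.
Proof. by rewrite sqfE; apply: sumr_ge0 => i _; apply: sumr_ge0 => j _; apply: sqr_ge0. Qed.

Lemma frobE m n (A : 'M[R]_(m, n)) : frob A = Num.sqrt (sqf A).
Proof. by rewrite sqfE. Qed.

Lemma frob2 m n (A : 'M[R]_(m, n)) : frob A ^+ 2 = sqf A.
Proof. by rewrite frobE sqr_sqrtr // sqf_ge0. Qed.

Lemma frob_ge0 m n (A : 'M[R]_(m, n)) : 0 <= frob A.
Proof. by rewrite frobE sqrtr_ge0. Qed.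

Lemma dotmC m n (A B : 'M[R]_(m, n)) : dotm A B = dotm B A.
Proof. by rewrite !dotmE; apply: eq_bigr => i _; apply: eq_bigr => j _; rewrite mulrC. Qed.

Lemma dotmDr m n (A B C : 'M[R]_(m, n)) : dotm A (B + C) = dotm A B + dotm A C.
Proof. by rewrite /dotm mulmxDr mxtraceD. Qed.

Lemma dotmDl m n (A B C : 'M[R]_(m, n)) : dotm (B + C) A = dotm B A + dotm C A.
Proof. by rewrite dotmC dotmDr !(dotmC A). Qed.

Lemma dotmZr m n a (A B : 'M[R]_(m, n)) : dotm A (a *: B) = a * dotm A B.
Proof. by rewrite /dotm -scalemxAr mxtraceZ. Qed.

Lemma dotmZl m n a (A B : 'M[R]_(m, n)) : dotm (a *: B) A = a * dotm B A.
Proof. by rewrite dotmC dotmZr dotmC. Qed.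

Lemma dotmNr m n (A B : 'M[R]_(m, n)) : dotm A (- B) = - dotm A B.
Proof. by rewrite -scaleN1r dotmZr mulN1r. Qed.

Lemma dotmNl m n (A B : 'M[R]_(m, n)) : dotm (- B) A = - dotm B A.
Proof. by rewrite dotmC dotmNr dotmC. Qed.

Lemma dotmBr m n (A B C : 'M[R]_(m, n)) : dotm A (B - C) = dotm A B - dotm A C.
Proof. by rewrite dotmDr dotmNr. Qed.

Lemma dotmBl m n (A B C : 'M[R]_(m, n)) : dotm (B - C) A = dotm B A - dotm C A.
Proof. by rewrite dotmDl dotmNl. Qed.

Lemma CS_sum (I : finType) (a b : I -> R) :
  (\sum_i a i * b i) ^+ 2 <= (\sum_i a i ^+ 2) * (\sum_i b i ^+ 2).
Proof.
set Sa := \sum_i a i ^+ 2; set Sb := \sum_i b i ^+ 2; set Sab := \sum_i a i * b i.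
have Sa0 : 0 <= Sa by apply: sumr_ge0 => i _; apply: sqr_ge0.
have Sb0 : 0 <= Sb by apply: sumr_ge0 => i _; apply: sqr_ge0.
have key : forall l : R, 0 <= l ^+ 2 * Sa - 2 * l * Sab + Sb.
  move=> l.
  have -> : l ^+ 2 * Sa - 2 * l * Sab + Sb = \sum_i (l * a i - b i) ^+ 2.
    rewrite /Sa /Sab /Sb mulr_sumr mulr_sumr -sumrN -!big_split /=.
    by apply: eq_bigr => i _; ring.
  by apply: sumr_ge0 => i _; apply: sqr_ge0.
have [Sa_eq0|Sa_gt0] := eqVneq Sa 0.
  have ha : forall i, a i = 0.
    move=> i; apply/eqP; rewrite -sqrf_eq0; apply/eqP.
    by apply: (@psumr_eq0P _ _ predT (fun i => a i ^+ 2)) => // j _; apply: sqr_ge0.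
  by rewrite /Sab big1 ?expr0n ?mulr_ge0 // => i _; rewrite ha mul0r.
have Sap : 0 < Sa by rewrite lt_def Sa_gt0 Sa0.
have := key (Sab / Sa).
have -> : (Sab / Sa) ^+ 2 * Sa - 2 * (Sab / Sa) * Sab + Sb = (Sa * Sb - Sab ^+ 2) / Sa.
  by field.
move=> h; rewrite -subr_ge0; have := mulr_ge0 h (ltW Sap).
by rewrite divfK ?gt_eqF.
Qed.

End Mx.
Section Mx2.
Variable R : realType.

Lemma sq_le (x y : R) : 0 <= y -> x ^+ 2 <= y ^+ 2 -> x <= y.
Proof. move=> y0 h; nra. Qed.

Lemma dotm_CS m n (A B : 'M[R]_(m, n)) : dotm A B ^+ 2 <= sqf A * sqf B.
Proof.
rewrite dotmE !sqfE !pair_bigA /=.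
exact: (CS_sum (fun p : 'I_m * 'I_n => A p.1 p.2) (fun p => B p.1 p.2)).
Qed.

Lemma dotm_le m n (A B : 'M[R]_(m, n)) : dotm A B <= frob A * frob B.
Proof.
apply: sq_le; first by rewrite mulr_ge0 ?frob_ge0.
by rewrite exprMn !frob2 dotm_CS.
Qed.

Lemma dotm_leN m n (A B : 'M[R]_(m, n)) : - dotm A B <= frob A * frob B.
Proof.
apply: sq_le; first by rewrite mulr_ge0 ?frob_ge0.
by rewrite sqrrN exprMn !frob2 dotm_CS.
Qed.

Lemma sqfD m n (A B : 'M[R]_(m, n)) : sqf (A + B) = sqf A + 2 * dotm A B + sqf B.
Proof. rewrite /sqf dotmDl !dotmDr (dotmC B A); ring. Qed.

Lemma sqfN m n (A : 'M[R]_(m, n)) : sqf (- A) = sqf A.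
Proof. by rewrite /sqf dotmNl dotmNr opprK. Qed.

Lemma sqfZ m n a (A : 'M[R]_(m, n)) : sqf (a *: A) = a ^+ 2 * sqf A.
Proof. by rewrite /sqf dotmZl dotmZr mulrA expr2. Qed.

Lemma frobN m n (A : 'M[R]_(m, n)) : frob (- A) = frob A.
Proof. by rewrite !frobE sqfN. Qed.

Lemma frobD m n (A B : 'M[R]_(m, n)) : frob (A + B) <= frob A + frob B.
Proof.
apply: sq_le; first by rewrite addr_ge0 ?frob_ge0.
rewrite frob2 sqfD sqrrD !frob2 lerD2r lerD2l -mulr_natr.
have := dotm_le A B; lra.
Qed.

Lemma frobB m n (A B : 'M[R]_(m, n)) : frob (A - B) <= frob A + frob B.
Proof. by rewrite -(frobN B) frobD. Qed.

Lemma sqf_add2 m n (A B : 'M[R]_(m, n)) : sqf (A + B) <= 2 * sqf A + 2 * sqf B.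
Proof.
have := sqf_ge0 (A - B); rewrite sqfD sqfN dotmNr sqfD => h; lra.
Qed.

Lemma sqf_tr m n (A : 'M[R]_(m, n)) : sqf A^T = sqf A.
Proof.
rewrite !sqfE exchange_big; apply: eq_bigr => i _; apply: eq_bigr => j _.
by rewrite mxE.
Qed.

Lemma frob_tr m n (A : 'M[R]_(m, n)) : frob A^T = frob A.
Proof. by rewrite !frobE sqf_tr. Qed.

Lemma sqf_mul m n p (A : 'M[R]_(m, n)) (B : 'M[R]_(n, p)) :
  sqf (A *m B) <= sqf A * sqf B.
Proof.
apply: (@le_trans _ _ (\sum_i \sum_j ((\sum_k A i k ^+ 2) * (\sum_k B k j ^+ 2)))).
  rewrite sqfE; apply: ler_sum => i _; apply: ler_sum => j _.
  rewrite mxE; exact: (CS_sum (fun k => A i k) (fun k => B k j)).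
rewrite sqfE (sqfE B) [X in _ * X]exchange_big mulr_suml; rewrite le_eqVlt; apply/orP; left; apply/eqP.
apply: eq_bigr => i _; by rewrite mulr_sumr.
Qed.

Lemma frob_mul m n p (A : 'M[R]_(m, n)) (B : 'M[R]_(n, p)) :
  frob (A *m B) <= frob A * frob B.
Proof.
apply: sq_le; first by rewrite mulr_ge0 ?frob_ge0.
by rewrite exprMn !frob2 sqf_mul.
Qed.

Lemma frob_gram m n (A : 'M[R]_(m, n)) : frob (A^T *m A) <= sqf A.
Proof. by rewrite -frob2 expr2; apply: le_trans (frob_mul _ _) _; rewrite frob_tr. Qed.

Lemma trace_bound r (X : 'M[R]_r) : (\tr X) ^+ 2 <= r%:R * sqf X.
Proof.
have h : (\sum_i X i i * 1) ^+ 2 <= (\sum_i X i i ^+ 2) * (\sum_(i < r) 1 ^+ 2).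
  exact: (CS_sum (fun i : 'I_r => X i i) (fun _ => 1)).
have e : \sum_i X i i * 1 = \sum_i X i i by apply: eq_bigr => i _; rewrite mulr1.
rewrite /mxtrace; rewrite e in h.
rewrite expr1n sumr_const card_ord in h; apply: le_trans h _.
rewrite mulrC ler_wpM2l //; rewrite sqfE; apply: ler_sum => i _.
rewrite (bigD1 i) //= lerDl; apply: sumr_ge0 => j _; apply: sqr_ge0.
Qed.

End Mx2.
Section Step.
Variable R : realType.

Lemma dot_gram k1 k2 r (U : 'M[R]_(k1, r)) (V : 'M[R]_(k2, r)) :
  dotm (U^T *m U) (V^T *m V) = sqf (U *m V^T).
Proof.
rewrite /sqf /dotm !trmx_mul !trmxK.
by rewrite [RHS]mxtrace_mulC !mulmxA [RHS]mxtrace_mulC !mulmxA.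
Qed.

Lemma frobZ m n (c : R) (W : 'M[R]_(m, n)) : 0 <= c -> frob (c *: W) = c * frob W.
Proof.
by move=> c0; rewrite !frobE sqfZ sqrtrM ?sqr_ge0 // sqrtr_sqr ger0_norm.
Qed.

Lemma gram_to_bound k r (A : 'M[R]_(k, r)) (mu : R) :
  0 < mu -> sqf (A^T *m A) <= 10 * mu ^+ 2 + frob (A^T *m A) * mu ->
  sqf A <= 5 * Num.sqrt r%:R * mu.
Proof.
move=> mu0 h.
set x := frob (A^T *m A).
have x0 : 0 <= x by apply: frob_ge0.
have hx : x ^+ 2 <= 10 * mu ^+ 2 + x * mu by rewrite /x frob2.
have x4 : x <= 4 * mu by nra.
have htr : (sqf A) ^+ 2 <= r%:R * x ^+ 2 by rewrite /x frob2; exact: trace_bound.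
have r0 : 0 <= r%:R :> R by apply: ler0n.
apply: sq_le; first by rewrite mulr_ge0 ?mulr_ge0 ?sqrtr_ge0 // ltW.
rewrite !exprMn sqr_sqrtr //.
apply: le_trans htr _.
have : x ^+ 2 <= 16 * mu ^+ 2 by nra.
move=> h2; nra.
Qed.

Lemma gram_bounds d1 d2 r (M : 'M[R]_(d1, d2)) (U : 'M[R]_(d1, r)) (V : 'M[R]_(d2, r)) (mu : R) :
  0 < mu -> sqf M = mu ^+ 2 -> sqf (U *m V^T - M) <= 4 * mu ^+ 2 ->
  frob (U^T *m U - V^T *m V) <= mu ->
  sqf U <= 5 * Num.sqrt r%:R * mu /\ sqf V <= 5 * Num.sqrt r%:R * mu.
Proof.
move=> mu0 hM hE hD.
set X := U^T *m U; set Y := V^T *m V.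
have hUV : sqf (U *m V^T) <= 10 * mu ^+ 2.
  have -> : U *m V^T = (U *m V^T - M) + M by rewrite subrK.
  apply: le_trans (sqf_add2 _ _) _; rewrite hM; lra.
split; apply: gram_to_bound => //.
- have -> : sqf X = sqf (U *m V^T) + dotm X (X - Y).
    by rewrite dotmBr -dot_gram /sqf; ring.
  apply: lerD => //; apply: le_trans (dotm_le _ _) _.
  by apply: ler_wpM2l => //; apply: frob_ge0.
- have -> : sqf Y = sqf (U *m V^T) - dotm Y (X - Y).
    by rewrite dotmBr dotmC -dot_gram /sqf; ring.
  apply: lerD => //; apply: le_trans (dotm_leN _ _) _.
  by apply: ler_wpM2l => //; apply: frob_ge0.
Qed.

End Step.
Section Step2.
Variable R : realType.
Variables (d1 d2 r : nat) (M : 'M[R]_(d1, d2)).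

Lemma trmxBZ m n (X Y : 'M[R]_(m, n)) (c : R) : (X - c *: Y)^T = X^T - c *: Y^T.
Proof. by apply/matrixP => i j; rewrite !mxE. Qed.

Lemma loss_id (U : 'M[R]_(d1, r)) (V : 'M[R]_(d2, r)) (eta : R) :
  let E := U *m V^T - M in let A := E *m V in let B := E^T *m U in
  (U - eta *: A) *m (V - eta *: B)^T - M =
  E - eta *: (A *m V^T + U *m B^T) + eta ^+ 2 *: (A *m B^T).
Proof.
move=> E A B.
rewrite trmxBZ mulmxBl !mulmxBr -!scalemxAl -!scalemxAr scalerA /E.
move: (U *m V^T) (U *m B^T) (A *m V^T) (A *m B^T) => P1 P2 P3 P4.
apply/matrixP => i j; rewrite !mxE; ring.
Qed.

Lemma gram_id (U : 'M[R]_(d1, r)) (V : 'M[R]_(d2, r)) (eta : R) :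
  let E := U *m V^T - M in let A := E *m V in let B := E^T *m U in
  (U - eta *: A)^T *m (U - eta *: A) - (V - eta *: B)^T *m (V - eta *: B) =
  (U^T *m U - V^T *m V) + eta ^+ 2 *: (A^T *m A - B^T *m B).
Proof.
move=> E A B.
have h1 : B^T *m V = U^T *m A by rewrite /A /B trmx_mul trmxK mulmxA.
have h2 : V^T *m B = A^T *m U by rewrite /A /B trmx_mul mulmxA.
rewrite !trmxBZ !mulmxBl !mulmxBr -!scalemxAl -!scalemxAr !scalerA h1 h2.
move: (U^T *m U) (V^T *m V) (U^T *m A) (A^T *m U) (A^T *m A) (B^T *m B) => P1 P2 P3 P4 P5 P6.
apply/matrixP => i j; rewrite !mxE; ring.
Qed.

Lemma sqf3 m n (E S Q : 'M[R]_(m, n)) (c e : R) :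
  sqf (E - c *: S + e *: Q) =
  sqf E + c ^+ 2 * sqf S + e ^+ 2 * sqf Q - 2 * c * dotm E S
  + 2 * e * dotm E Q - 2 * c * e * dotm S Q.
Proof.
rewrite sqfD sqfD sqfN sqfZ sqfZ dotmNr dotmZr dotmDl dotmNl !dotmZl !dotmZr.
ring.
Qed.

End Step2.
Section Step3.
Variable R : realType.
Variables (d1 d2 r : nat) (M : 'M[R]_(d1, d2)).

Lemma tr_aux1 m n k (E : 'M[R]_(m, n)) (V : 'M[R]_(n, k)) :
  dotm E (E *m V *m V^T) = sqf (E *m V).
Proof.
by rewrite /sqf /dotm mulmxA [LHS]mxtrace_mulC trmx_mul !mulmxA.
Qed.

Lemma tr_aux2 m n k (E : 'M[R]_(m, n)) (U : 'M[R]_(m, k)) :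
  dotm E (U *m (E^T *m U)^T) = sqf (E^T *m U).
Proof.
by rewrite /sqf /dotm mulmxA [LHS]mxtrace_mulC mulmxA.
Qed.

Lemma step_lemma (U : 'M[R]_(d1, r)) (V : 'M[R]_(d2, r)) (eta mu K : R) :
  0 <= eta -> 0 < mu -> eta * K <= 1/20 -> eta * mu <= 1/100 ->
  sqf U <= K -> sqf V <= K -> sqf (U *m V^T - M) <= 4 * mu ^+ 2 ->
  sqf ((gd_step M eta (U, V)).1 *m (gd_step M eta (U, V)).2^T - M)
     <= sqf (U *m V^T - M) /\
  frob ((gd_step M eta (U, V)).1^T *m (gd_step M eta (U, V)).1
        - (gd_step M eta (U, V)).2^T *m (gd_step M eta (U, V)).2)
     <= frob (U^T *m U - V^T *m V) + eta ^+ 2 * (8 * mu ^+ 2 * K).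
Proof.
move=> eta0 mu0 hK hmu hU hV hE.
rewrite /gd_step /=.
set E := U *m V^T - M; set A := E *m V; set B := E^T *m U.
have K0 : 0 <= K by apply: le_trans hU; apply: sqf_ge0.
have ha : sqf A <= 4 * mu ^+ 2 * K.
  apply: le_trans (sqf_mul _ _) _; apply: ler_pM => //; apply: sqf_ge0.
have hb : sqf B <= 4 * mu ^+ 2 * K.
  apply: le_trans (sqf_mul _ _) _; rewrite sqf_tr; apply: ler_pM => //; apply: sqf_ge0.
split; last first.
  rewrite gram_id; apply: le_trans (frobD _ _) _; apply: lerD => //.
  rewrite frobZ ?sqr_ge0 //; apply: ler_wpM2l; first by apply: sqr_ge0.
  apply: le_trans (frobB _ _) _.
  have := frob_gram A; have := frob_gram B; lra.
rewrite loss_id sqf3.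
set S := A *m V^T + U *m B^T; set Q := A *m B^T.
set a := sqf A; set b := sqf B; set g := a + b.
have a0 : 0 <= a by apply: sqf_ge0.
have b0 : 0 <= b by apply: sqf_ge0.
have hES : dotm E S = g.
  by rewrite /S dotmDr /g /a /b /A /B tr_aux1 tr_aux2.
have hS : sqf S <= 2 * K * g.
  apply: le_trans (sqf_add2 _ _) _.
  have h1 : sqf (A *m V^T) <= a * K.
    apply: le_trans (sqf_mul _ _) _; rewrite sqf_tr; apply: ler_wpM2l => //.
  have h2 : sqf (U *m B^T) <= K * b.
    apply: le_trans (sqf_mul _ _) _; rewrite sqf_tr; apply: ler_wpM2r => //.
  rewrite /g; nra.
have hQ : sqf Q <= a * b.
  by apply: le_trans (sqf_mul _ _) _; rewrite sqf_tr.
have S0 : 0 <= sqf S by apply: sqf_ge0.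
have Q0 : 0 <= sqf Q by apply: sqf_ge0.
have g0 : 0 <= g by rewrite /g addr_ge0.
have hab : a * b <= g * (4 * mu ^+ 2 * K).
  have c0 : 0 <= 4 * mu ^+ 2 * K.
    by apply: mulr_ge0 => //; apply: mulr_ge0 => //; apply: sqr_ge0.
  rewrite /g; nra.
have hab2 : 4 * (a * b) <= g ^+ 2 by rewrite /g; have := sqr_ge0 (a - b); nra.
have hx1 : dotm E Q <= mu * g.
  apply: sq_le; first by pos.
  apply: le_trans (dotm_CS _ _) _.
  apply: le_trans (_ : 4 * mu ^+ 2 * (a * b) <= _).
    apply: ler_pM => //; apply: sqf_ge0.
  rewrite exprMn; nra.
have hx2 : - dotm S Q <= 3 * mu * K * g.
  apply: sq_le; first by pos.
  rewrite sqrrN; apply: le_trans (dotm_CS _ _) _.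
  apply: le_trans (_ : (2 * K * g) * (g * (4 * mu ^+ 2 * K)) <= _).
    by apply: ler_pM => //; apply: le_trans hQ hab.
  rewrite !exprMn; have := sqr_ge0 (mu * K * g); rewrite !exprMn; nra.
rewrite -/E hES.
set p := eta * K; set q := eta * mu.
have p0 : 0 <= p by rewrite /p; pos.
have q0 : 0 <= q by rewrite /q; pos.
set x1 := dotm E Q; set x2 := dotm S Q.
have e20 : 0 <= eta ^+ 2 by pos.
have T1 : eta ^+ 2 * sqf S <= eta ^+ 2 * (2 * K * g) by apply: ler_wpM2l.
have T2 : (eta ^+ 2) ^+ 2 * sqf Q <= (eta ^+ 2) ^+ 2 * (g * (4 * mu ^+ 2 * K)).
  by apply: ler_wpM2l; [pos | apply: le_trans hQ hab].
have T3 : 2 * eta ^+ 2 * x1 <= 2 * eta ^+ 2 * (mu * g) by apply: ler_wpM2l; pos.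
have T4 : 2 * eta * eta ^+ 2 * (- x2) <= 2 * eta * eta ^+ 2 * (3 * mu * K * g).
  by apply: ler_wpM2l; pos.
have inner : 2 * p + 4 * q ^+ 2 * p + 2 * q + 6 * q * p <= 2.
  have hp : p <= 1/20 by [].
  have hq : q <= 1/100 by [].
  nra.
have fin : eta * g * (2 * p + 4 * q ^+ 2 * p + 2 * q + 6 * q * p) <= eta * g * 2.
  by apply: ler_wpM2l; pos.
have eqI : eta ^+ 2 * (2 * K * g) + (eta ^+ 2) ^+ 2 * (g * (4 * mu ^+ 2 * K))
   + 2 * eta ^+ 2 * (mu * g) + 2 * eta * eta ^+ 2 * (3 * mu * K * g)
   = eta * g * (2 * p + 4 * q ^+ 2 * p + 2 * q + 6 * q * p).
  by rewrite /p /q; ring.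
have T4' : - (2 * eta * eta ^+ 2 * x2) <= 2 * eta * eta ^+ 2 * (3 * mu * K * g).
  by rewrite -mulrN.
lra.
Qed.

End Step3.
Section Num.
Variable R : realType.

Lemma eta_facts (eps mu rr T : R) : 0 < eps -> eps < mu -> 1 <= rr -> 1 <= T ->
  let eta := Num.sqrt (eps / rr) / (100 * T * (mu * Num.sqrt mu)) in
  [/\ 0 <= eta, eta * (5 * Num.sqrt rr * mu) <= 1/20, eta * mu <= 1/100 &
      eta ^+ 2 * (8 * mu ^+ 2 * (5 * Num.sqrt rr * mu)) <= eps / (250 * T ^+ 2)].
Proof.
move=> e0 emu r1 T1 eta.
have mu0 : 0 < mu by lra.
have rr0 : 0 < rr by lra.
set rho := Num.sqrt rr; set sg := Num.sqrt mu; set se := Num.sqrt (eps / rr).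
have rho2 : rho ^+ 2 = rr by rewrite sqr_sqrtr // ltW.
have sg2 : sg ^+ 2 = mu by rewrite sqr_sqrtr // ltW.
have se2 : se ^+ 2 = eps / rr by rewrite sqr_sqrtr // divr_ge0 // ltW.
have rho1 : 1 <= rho by rewrite /rho -sqrtr1 ler_sqrt //; lra.
have sg0 : 0 < sg by rewrite sqrtr_gt0.
have se0 : 0 <= se by apply: sqrtr_ge0.
have serho : se * rho <= sg.
  apply: sq_le; first by apply: ltW.
  rewrite exprMn se2 rho2 sg2 divfK ?gt_eqF //; lra.
have sesg : se <= sg by nra.
have Den0 : 0 < 100 * T * (mu * sg) by rewrite !mulr_gt0 //; lra.
have etaE : eta = se / (100 * T * (mu * sg)) by [].
split.
- by rewrite etaE divr_ge0 // ltW.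
- rewrite etaE mulrAC ler_pdivrMr //.
  have h1 : se * rho * mu <= sg * mu by apply: ler_wpM2r => //; apply: ltW.
  have h2 : sg * mu <= T * (sg * mu) by rewrite ler_peMl // mulr_ge0 // ltW.
  lra.
- rewrite etaE mulrAC ler_pdivrMr //.
  have h1 : se * mu <= sg * mu by apply: ler_wpM2r => //; apply: ltW.
  have h2 : sg * mu <= T * (sg * mu) by rewrite ler_peMl // mulr_ge0 // ltW.
  lra.
have e1 : eta ^+ 2 * (8 * mu ^+ 2 * (5 * rho * mu)) = (eps / (250 * T ^+ 2)) / rho.
  rewrite etaE expr_div_n !exprMn sg2 se2.
  rewrite -rho2.
  have hT : T != 0 by rewrite gt_eqF //; lra.
  have hm : mu != 0 by rewrite gt_eqF.
  have hr : rho != 0 by rewrite gt_eqF //; lra.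
  by field; rewrite hT hm hr.
rewrite e1 ler_pdivrMr; last by lra.
have : 0 <= eps / (250 * T ^+ 2) by rewrite divr_ge0 //; pos.
nra.
Qed.
End Num.
Section Det.
Variable R : realType.

Lemma num_step (eps T : R) : 0 < eps -> 1 <= T ->
  eps - eps / (4 * T) + eps / (250 * T ^+ 2) <= eps - eps / (4 * (T + 1)).
Proof.
move=> e0 T1.
have h : eps - eps / (4 * (T + 1)) - (eps - eps / (4 * T) + eps / (250 * T ^+ 2))
   = eps * (246 * T - 4) / (1000 * T ^+ 2 * (T + 1)).
  have hT : T != 0 by rewrite gt_eqF //; lra.
  have hT1 : T + 1 != 0 by rewrite gt_eqF //; lra.
  by field; rewrite hT hT1.
rewrite -subr_ge0 h.
apply: divr_ge0.
  by apply: mulr_ge0; lra.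
apply: mulr_ge0; last lra.
apply: mulr_ge0; [lra | apply: sqr_ge0].
Qed.

End Det.
Section Det2.
Variable R : realType.

Lemma det_main d1 d2 r (M : 'M[R]_(d1, d2)) (eps : R)
  (U0 : 'M[R]_(d1, r)) (V0 : 'M[R]_(d2, r)) :
  (0 < r)%N -> 0 < eps -> eps < frob M -> sqf U0 <= eps / 4 -> sqf V0 <= eps / 4 ->
  let UV := gd M (step_size M eps r) U0 V0 in
    fobj M (UV 0).1 (UV 0).2 <= 2 * frob M ^+ 2 /\
    forall t : nat,
      frob ((UV t).1^T *m (UV t).1 - (UV t).2^T *m (UV t).2) <= eps /\
      fobj M (UV t.+1).1 (UV t.+1).2 <= fobj M (UV t).1 (UV t).2 /\
      frob (UV t).1 ^+ 2 <= 5 * Num.sqrt r%:R * frob M /\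
      frob (UV t).2 ^+ 2 <= 5 * Num.sqrt r%:R * frob M.
Proof.
move=> r0 e0 emu hU0 hV0 UV.
have mu0 : 0 < frob M by apply: lt_trans e0 emu.
have hM : sqf M = frob M ^+ 2 by rewrite frob2.
set eta := step_size M eps r.
set K := 5 * Num.sqrt r%:R * (frob M).
pose Inv (p : 'M[R]_(d1, r) * 'M[R]_(d2, r)) (t : nat) :=
  sqf (p.1 *m p.2^T - M) <= 4 * (frob M) ^+ 2 /\
  frob (p.1^T *m p.1 - p.2^T *m p.2) <= eps - eps / (4 * (t.+1)%:R).
have inv_bounds : forall p t, Inv p t ->
    sqf p.1 <= K /\ sqf p.2 <= K.
  move=> [U V] t [h1 h2] /=.
  apply: (gram_bounds (M := M)) => //.
  apply: le_trans h2 _.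
  have : 0 <= eps / (4 * (t.+1)%:R) by apply: divr_ge0; [lra | apply: mulr_ge0; [lra | apply: ler0n]].
  move=> h; apply: le_trans (ltW emu); rewrite lerBlDr lerDl //.
have inv_step : forall t, Inv (UV t) t ->
    sqf ((UV t.+1).1 *m (UV t.+1).2^T - M) <= sqf ((UV t).1 *m (UV t).2^T - M)
    /\ Inv (UV t.+1) t.+1.
  move=> t.
  have -> : UV t.+1 = gd_step M (eta t) (UV t) by [].
  case: (UV t) => U V hinv.
  have [hKU hKV] := inv_bounds _ _ hinv.
  case: hinv => /= hE hD.
  have T1 : 1 <= (t.+1)%:R :> R by rewrite ler1n.
  have r1 : 1 <= r%:R :> R by rewrite ler1n.
  have [eta0 etaK etamu eta2] := eta_facts e0 emu r1 T1.
  have [s1 s2] := step_lemma eta0 mu0 etaK etamu hKU hKV hE.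
  split => //; split; first by apply: le_trans s1 hE.
  apply: le_trans s2 _.
  apply: le_trans (_ : eps - eps / (4 * (t.+1)%:R) + eps / (250 * (t.+1)%:R ^+ 2) <= _).
    apply: lerD => //.
  rewrite -[(t.+2)%:R]natr1.
  exact: num_step.
have inv_all : forall t, Inv (UV t) t.
  elim=> [|t IH]; last by case: (inv_step t IH).
  rewrite /Inv /=; split.
    apply: le_trans (sqf_add2 _ _) _; rewrite sqfN hM.
    have : sqf (U0 *m V0^T) <= eps / 4 * (eps / 4).
      apply: le_trans (sqf_mul _ _) _; rewrite sqf_tr.
      by apply: ler_pM => //; apply: sqf_ge0.
    nra.
  apply: le_trans (frobB _ _) _.
  have := frob_gram U0; have := frob_gram V0.
  rewrite mulr1; lra.
split.
  have [h _] := inv_all 0.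
  rewrite /fobj frob2; lra.
move=> t.
have [hE hD] := inv_all t.
have [hKU hKV] := inv_bounds _ _ (inv_all t).
have [hE' _] := inv_step t (inv_all t).
split.
  apply: le_trans hD _.
  have h : 0 <= eps / (4 * (t.+1)%:R) by apply: divr_ge0; [lra | apply: mulr_ge0; [lra | apply: ler0n]].
  by rewrite lerBlDr lerDl.
split.
  by rewrite /fobj !frob2; lra.
by rewrite !frob2.
Qed.

End Det2.
Section Tail.
Variable R : realType.
Local Notation mu := (@lebesgue_measure R).

Lemma nf_le1 (b x : R) : normal_fun 0 b x <= 1.
Proof.
rewrite /normal_fun -expR0 ler_expR mulNr oppr_le0.
by apply: mulr_ge0; [apply: sqr_ge0 | rewrite invr_ge0 mulrn_wge0 // sqr_ge0].
Qed.

Lemma nf_out (b x : R) : 0 < b -> b < `|x| -> normal_fun 0 b x <= 2 / 3.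
Proof.
move=> b0 bx.
have hb2 : b ^+ 2 < x ^+ 2.
  rewrite -[x ^+ 2]real_normK ?num_real //.
  by rewrite ltr_pXn2r // ?nnegrE ?normr_ge0 // ltW.
have hq : 1 <= x ^+ 2 / b ^+ 2.
  by rewrite ler_pdivlMr ?exprn_gt0 // mul1r; apply: ltW.
have h1 : normal_fun 0 b x <= expR (- (1/2)).
  rewrite /normal_fun ler_expR subr0 -mulr_natr mulNr lerN2 invfM mulrA.
  lra.
apply: le_trans h1 _.
rewrite expRN.
have h2 : 3 / 2 <= expR (1 / 2 : R).
  have := expR_ge1Dx (1 / 2 : R); lra.
have h3 : 0 < expR (1/2 : R) by apply: expR_gt0.
rewrite -[leRHS]invrK lef_pV2 ?posrE //; lra.
Qed.

End Tail.
Section Tail2.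
Variable R : realType.
Local Notation mu := (@lebesgue_measure R).

Lemma integral_pdf_nf (s b : R) : 0 < s -> 0 < b ->
  (\int[mu]_x (normal_pdf 0 s x * normal_fun 0 b x)%:E =
   (b / Num.sqrt (s ^+ 2 + b ^+ 2))%:E)%E.
Proof.
move=> s0 b0.
set u := Num.sqrt (s ^+ 2 + b ^+ 2).
have u0 : 0 < u by rewrite sqrtr_gt0 addr_gt0 // exprn_gt0.
have u2 : u ^+ 2 = s ^+ 2 + b ^+ 2 by rewrite sqr_sqrtr //; pos.
set sg := s * b / u.
have sg0 : 0 < sg by rewrite /sg !mulr_gt0 // invr_gt0.
have hpt : forall x, normal_pdf 0 s x * normal_fun 0 b x =
    (normal_peak s / normal_peak sg) * normal_pdf 0 sg x.
  move=> x; rewrite !normal_pdfE ?gt_eqF //=.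
  have pk : normal_peak sg != 0 by rewrite gt_eqF // normal_peak_gt0 // gt_eqF.
  have -> : normal_fun 0 sg x = normal_fun 0 s x * normal_fun 0 b x.
    rewrite /normal_fun -expRD; congr expR; rewrite subr0 /sg.

    have hu : u != 0 by rewrite gt_eqF.
    have hs : s != 0 by rewrite gt_eqF.
    have hb : b != 0 by rewrite gt_eqF.
    rewrite !exprMn exprVn u2.
    field.
    rewrite hs hb /=.
    have : 0 < s ^+ 2 + b ^+ 2 by rewrite addr_gt0 // exprn_gt0.
    move=> h; rewrite gt_eqF //.
  by field.
under eq_integral do rewrite hpt EFinM.
rewrite integralZl //; last exact: integrable_normal_pdf.
rewrite integral_normal_pdf mule1; congr EFin.
rewrite /normal_peak.
have e : sg ^+ 2 * pi *+ 2 = (b / u) ^+ 2 * (s ^+ 2 * pi *+ 2).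
  by rewrite /sg; ring.
have hX : 0 < s ^+ 2 * pi *+ 2 by rewrite mulrn_wgt0 // mulr_gt0 ?exprn_gt0 ?pi_gt0.
rewrite e sqrtrM; last by rewrite sqr_ge0.
rewrite sqrtr_sqr ger0_norm; last by rewrite divr_ge0 // ltW.
have h1 : Num.sqrt (s ^+ 2 * pi *+ 2) != 0 by rewrite gt_eqF // sqrtr_gt0.
have h2 : b / u != 0 by rewrite gt_eqF // divr_gt0.
by field; rewrite h1 !gt_eqF.
Qed.

End Tail2.
Section Tail3.
Variable R : realType.
Local Notation mu := (@lebesgue_measure R).

Lemma normal_tail (s b : R) : 0 < s -> 0 < b ->
  ((1 - 2 * (s ^+ 2 / b ^+ 2))%:E <= normal_prob 0 s `[(- b)%R, b]%classic)%E.
Proof.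
move=> s0 b0.
set B := `[(- b)%R, b]%classic.
have mB : measurable B by apply: measurable_itv.
have mpdf : measurable_fun setT (normal_pdf 0 s) by apply: measurable_normal_pdf.
have mnf : measurable_fun setT (normal_fun 0 b) by apply: measurable_normal_fun.
have mind : measurable_fun setT (\1_B : R -> R) by exact: measurable_indic.
have hle : (\int[mu]_x (normal_pdf 0 s x * normal_fun 0 b x)%:E <=
    \int[mu]_x ((1/3 * (\1_B x * normal_pdf 0 s x))%:E + (2/3 * normal_pdf 0 s x)%:E))%E.
  apply: ge0_le_integral => //.
  - by move=> x _; rewrite lee_fin mulr_ge0 ?normal_pdf_ge0 ?normal_fun_ge0.
  - apply/measurable_EFinP; exact: measurable_funM.
  - apply: emeasurable_funD; apply/measurable_EFinP.
      by apply: measurable_funM; [exact: measurable_cst | exact: measurable_funM].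
    by apply: measurable_funM; [exact: measurable_cst | exact: mpdf].
  move=> x _; rewrite -EFinD lee_fin indicE.
  have p0 := normal_pdf_ge0 0 s x.
  have [xB|xB] := boolP (x \in B).
    have -> : (true%:R : R) = 1 by [].
    have := nf_le1 b x => h.
    have : normal_pdf 0 s x * normal_fun 0 b x <= normal_pdf 0 s x * 1.
      by apply: ler_wpM2l.
    rewrite mul1r; lra.
  have bx : b < `|x|.
    move/negP: xB => hx.
    rewrite ltNge; apply/negP => hx'; apply: hx.
    by apply/mem_set; rewrite /B /= in_itv /= -ler_norml.
  have -> : (false%:R : R) = 0 by [].
  have := nf_out b0 bx => h.
  have : normal_pdf 0 s x * normal_fun 0 b x <= normal_pdf 0 s x * (2/3).
    by apply: ler_wpM2l.
  rewrite mul0r; lra.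
rewrite integral_pdf_nf // in hle.
have hR : (\int[mu]_x ((1/3 * (\1_B x * normal_pdf 0 s x))%:E + (2/3 * normal_pdf 0 s x)%:E)
   = (1/3)%:E * normal_prob 0 s B + (2/3)%:E)%E.
rewrite ge0_integralD //; first last.
- apply/measurable_EFinP.
  by apply: measurable_funM; [exact: measurable_cst | exact: mpdf].
- by move=> x _; rewrite lee_fin mulr_ge0 ?normal_pdf_ge0.
- apply/measurable_EFinP.
  by apply: measurable_funM; [exact: measurable_cst | exact: measurable_funM].
- by move=> x _; rewrite lee_fin mulr_ge0 ?mulr_ge0 ?normal_pdf_ge0 // indicE.
under eq_integral do rewrite EFinM.
rewrite ge0_integralZl_EFin //; first last.
- by apply/measurable_EFinP; exact: measurable_funM.
- by move=> x _; rewrite lee_fin mulr_ge0 ?normal_pdf_ge0 // indicE.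
under [X in (_ + X)%E]eq_integral do rewrite EFinM.
rewrite ge0_integralZl_EFin //; first last.
- by apply/measurable_EFinP; exact: mpdf.
- by move=> x _; rewrite lee_fin normal_pdf_ge0.
rewrite integral_normal_pdf mule1.
have -> : (\int[mu]_x (\1_B x * normal_pdf 0 s x)%:E = normal_prob 0 s B)%E.
  rewrite /normal_prob [RHS]integral_mkcond; apply: eq_integral => x _.
  rewrite /patch indicE; case: ifP => _; by rewrite ?mul1r ?mul0r.
  by [].
rewrite hR in hle.
have h0 : (0 <= normal_prob 0 s B)%E by apply: measure_ge0.
set u := Num.sqrt (s ^+ 2 + b ^+ 2) in hle.
have u0 : 0 < u by rewrite sqrtr_gt0 addr_gt0 // exprn_gt0.
have u2 : u ^+ 2 = s ^+ 2 + b ^+ 2 by rewrite sqr_sqrtr //; pos.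
set w := b / u in hle.
have w0 : 0 < w by rewrite divr_gt0.
have w1 : w <= 1.
  rewrite ler_pdivrMr // mul1r; apply: sq_le; first exact: ltW.
  rewrite u2; have := sqr_ge0 s; lra.
have qE : s ^+ 2 / b ^+ 2 = (1 - w ^+ 2) / w ^+ 2.
  have hb : b != 0 by rewrite gt_eqF.
  have hu : u != 0 by rewrite gt_eqF.
  rewrite /w expr_div_n.
  have -> : s ^+ 2 = u ^+ 2 - b ^+ 2 by rewrite u2; ring.
  by field; rewrite ?hb ?hu.
have key : 0 <= 3 * w - 3 + 2 * (s ^+ 2 / b ^+ 2).
  rewrite qE.
  have hw : w != 0 by rewrite gt_eqF.
  have -> : 3 * w - 3 + 2 * ((1 - w ^+ 2) / w ^+ 2) =
            ((1 - w) * (2 + 2 * w - 3 * w ^+ 2)) / w ^+ 2.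
    by field; rewrite ?hw.
  apply: divr_ge0; last by apply: sqr_ge0.
  apply: mulr_ge0; first lra.
  nra.
move: hle h0; case: (normal_prob 0 s B) => [p| |] hle h0.
- rewrite -EFinM -EFinD lee_fin in hle; rewrite lee_fin.
  lra.
- by rewrite leey.
- by [].
Qed.

End Tail3.
Lemma bernoulli_ineq (R : realType) (x : R) (n : nat) : -1 <= x -> 1 + n%:R * x <= (1 + x) ^+ n.
Proof.
move=> x1; elim: n => [|n IH]; first by rewrite mul0r addr0 expr0.
rewrite exprS -natr1.
have h0 : 0 <= 1 + x by lra.
have hn : 0 <= n%:R :> R by apply: ler0n.
have : (1 + x) * (1 + n%:R * x) <= (1 + x) * (1 + x) ^+ n by apply: ler_wpM2l.
have := mulr_ge0 hn (sqr_ge0 x).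
nra.
Qed.

Lemma entries_bound (R : realType) m n (A : 'M[R]_(m, n)) (c : R) :
  (forall i j, A i j ^+ 2 <= c) -> sqf A <= (m * n)%:R * c.
Proof.
move=> h; rewrite sqfE.
apply: le_trans (_ : \sum_(i < m) \sum_(j < n) c <= _).
  by apply: ler_sum => i _; apply: ler_sum => j _; apply: h.
by rewrite !sumr_const !card_ord -mulrnA mulr_natl mulnC.
Qed.
Unset Implicit Arguments.
Theorem lemma3p1 (R : realType) (delta : R) (hdelta0 : 0 < delta)
  (hdelta1 : delta < 1) :
  exists C k : nat,
  forall (d1 d2 r : nat) (M : 'M[R]_(d1, d2)) (eps : R),
  \rank M = r -> 0 < eps -> eps < frob M ->
  forall (dT : measure_display) (T : measurableType dT) (P : probability T R)
    (U0 : T -> 'M[R]_(d1, r)) (V0 : T -> 'M[R]_(d2, r)) (s : R),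
  0 < s -> s ^+ 2 <= eps / ((C.+1)%:R * (maxn d1 d2)%:R ^+ k) ->
  iid_normal P (init_entries U0 V0) s ->
  exists A : set T, measurable A /\ ((1 - delta)%:E <= P A)%E /\
  forall w, A w ->
    let UV := gd M (step_size M eps r) (U0 w) (V0 w) in
    fobj M (UV 0).1 (UV 0).2 <= 2 * frob M ^+ 2 /\
    forall t : nat,
      frob ((UV t).1^T *m (UV t).1 - (UV t).2^T *m (UV t).2) <= eps /\
      fobj M (UV t.+1).1 (UV t.+1).2 <= fobj M (UV t).1 (UV t).2 /\
      frob (UV t).1 ^+ 2 <= 5 * Num.sqrt r%:R * frob M /\
      frob (UV t).2 ^+ 2 <= 5 * Num.sqrt r%:R * frob M.
Proof.
pose C := Num.bound (16 / delta).
have hC : 16 / delta < C%:R by apply: archi_boundP; rewrite divr_ge0 // ltW.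
exists C, 4%N.
move=> d1 d2 r M eps hrank e0 emu dT T P U0 V0 s s0 hs hiid.
have r0 : (0 < r)%N.
  rewrite lt0n; apply/negP => /eqP r0'.
  have M0 : M = 0 by apply/eqP; rewrite -mxrank_eq0 hrank r0'.
  move: emu; rewrite M0 frobE /sqf /dotm mulmx0 mxtrace0 sqrtr0; lra.
have hrd1 : (r <= d1)%N by rewrite -hrank rank_leq_row.
have hrd2 : (r <= d2)%N by rewrite -hrank rank_leq_col.
set D := maxn d1 d2.
have hd1 : (d1 <= D)%N by apply: leq_maxl.
have hd2 : (d2 <= D)%N by apply: leq_maxr.
set DR := D%:R : R.
have DR1 : 1 <= DR by rewrite /DR ler1n; apply: leq_trans r0 (leq_trans hrd1 hd1).
have DR0 : 0 < DR by lra.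
set b := Num.sqrt (eps / (4 * DR ^+ 2)).
have b2 : b ^+ 2 = eps / (4 * DR ^+ 2).
  by rewrite sqr_sqrtr //; apply: divr_ge0; [exact: ltW | apply: mulr_ge0; [lra | apply: sqr_ge0]].
have b0 : 0 < b.
  by rewrite sqrtr_gt0; apply: divr_gt0 => //; apply: mulr_gt0; [lra | apply: exprn_gt0].
set B := `[(- b)%R, b]%classic.
have mB : measurable B by apply: measurable_itv.
set X := init_entries U0 V0.
case: hiid => mX [lawX indX].
exists (\bigcap_(k in [set: ('I_d1 * 'I_r + 'I_d2 * 'I_r)%type]) (X k @^-1` B)).
split.
  apply: fin_bigcap_measurable; first exact: finite_finset.
  move=> k _; rewrite -(setTI (X k @^-1` B)); exact: (mX k).
split.
  rewrite (indX (fun=> B)); last by move=> k.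
  rewrite (eq_bigr (fun _ => normal_prob 0 s B)); last by move=> k _; apply: lawX.
  have htail := normal_tail s0 b0.
  have h0 : (0 <= normal_prob 0 s B)%E by apply: measure_ge0.
  have h1 : (normal_prob 0 s B <= 1)%E by apply: probability_le1.
  move: htail h0 h1; rewrite -/B; case: (normal_prob 0 s B) => [p| |] // htail h0 h1.
  rewrite prodEFin lee_fin prodr_const.
  rewrite lee_fin in htail; rewrite lee_fin in h0; rewrite lee_fin in h1.
  rewrite card_sum !card_prod !card_ord.
  set N := (d1 * r + d2 * r)%N.
  have hN : N%:R <= 2 * DR ^+ 2.
    have : (N <= D * D + D * D)%N.
      by rewrite /N leq_add // leq_mul // (leq_trans hrd1 hd1).
    rewrite -(ler_nat R) => h; apply: le_trans h _.
    have -> : 2 * DR ^+ 2 = DR * DR + DR * DR by ring.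
    by rewrite natrD natrM.
  set S2 := s ^+ 2 in hs htail *.
  have hsC : S2 * ((C.+1)%:R * DR ^+ 4) <= eps.
    by rewrite -ler_pdivlMr // mulr_gt0 // exprn_gt0.
  have tauE : 2 * (S2 / b ^+ 2) = 8 * DR ^+ 2 * S2 / eps.
    rewrite b2.
    have hD : DR != 0 by rewrite gt_eqF.
    have he : eps != 0 by rewrite gt_eqF.
    by field; rewrite ?hD ?he.
  rewrite tauE in htail.
  have hC2 : 16 <= delta * (C.+1)%:R.
    rewrite ltr_pdivrMr // in hC.
    have : (C%:R : R) <= (C.+1)%:R by rewrite ler_nat.
    nra.
  have S20 : 0 <= S2 by apply: sqr_ge0.
  have key : N%:R * (8 * DR ^+ 2 * S2 / eps) <= delta.
    rewrite mulrA ler_pdivrMr //.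
    have h4 : 0 <= DR ^+ 2 by apply: sqr_ge0.
    have hA : N%:R * (8 * DR ^+ 2 * S2) <= 2 * DR ^+ 2 * (8 * DR ^+ 2 * S2).
      by apply: ler_wpM2r => //; pos.
    have hB : 16 * (DR ^+ 4 * S2) <= delta * (C.+1)%:R * (DR ^+ 4 * S2).
      by apply: ler_wpM2r => //; apply: mulr_ge0 => //; apply: exprn_ge0; lra.
    have hD4 : DR ^+ 4 = DR ^+ 2 * DR ^+ 2 by rewrite -exprD.
    rewrite hD4 in hB hsC.
    nra.
  have hbern := @bernoulli_ineq R (p - 1) N.
  have -> : p = 1 + (p - 1) by ring.
  have : -1 <= p - 1 by lra.
  move=> /hbern hb'.
  apply: le_trans hb'.
  have hN0 : 0 <= N%:R :> R by apply: ler0n.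
  nra.
move=> w Aw.
have hent : forall k, X k w ^+ 2 <= b ^+ 2.
  move=> k; have : B (X k w) by apply: Aw.
  rewrite /B /= in_itv /= -ler_norml => h.
  rewrite -[X k w ^+ 2]real_normK ?num_real //.
  by rewrite ler_pXn2r // ?nnegrE ?normr_ge0 // ltW.
have hDb : (D * D)%:R * b ^+ 2 = eps / 4.
  rewrite b2 natrM -/DR.
  have hD : DR != 0 by rewrite gt_eqF.
  by field; rewrite ?hD.
have hb20 : 0 <= b ^+ 2 by apply: sqr_ge0.
have hU : sqf (U0 w) <= eps / 4.
  apply: le_trans (entries_bound (c := b ^+ 2) _) _.
    by move=> i j; exact: (hent (inl (i, j))).
  rewrite -hDb; apply: ler_wpM2r => //; rewrite ler_nat.
  by apply: leq_mul => //; apply: leq_trans hrd1 hd1.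
have hV : sqf (V0 w) <= eps / 4.
  apply: le_trans (entries_bound (c := b ^+ 2) _) _.
    by move=> i j; exact: (hent (inr (i, j))).
  rewrite -hDb; apply: ler_wpM2r => //; rewrite ler_nat.
  by apply: leq_mul => //; apply: leq_trans hrd1 hd1.
exact: det_main.
Qed.
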